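(* In the variable-assignment instance below, for every well-formed program $C$ and every $P\subseteq\mathcal S$: if $\mathrm{free}(P)\cap\mathrm{mod}(C)=\emptyset$, then $\vDash\{\Box P\}\ C\ \{\Box P\}$.
   Context: $\mathcal A=\langle U,+,\cdot,\mathbf 0,\mathbf 1\rangle$ is a partial semiring ($+$ commutative, associative, possibly partial, unit $\mathbf 0$; $\cdot$ total, associative, unit $\mathbf 1$; two-sided distributivity; $\mathbf 0$ annihilates), naturally ordered ($u\le v$ iff $\exists w.\,u+w=v$ is a partial order), Scott continuous, with a top element. Infinite sums are suprema of finite partial sums. $\mathcal W(X)$: maps $m:X\to U$ with countable support $\mathrm{supp}(m)=\{x:m(x)\ne\mathbf 0\}$ and defined mass, pointwise operations. $\eta(x)(y)=\mathbf 1$ if $x=y$ else $\mathbf 0$; $f^\dagger(m)(y)=\sum_{x\in\mathrm{supp}(m)}m(x)\cdot f(x)(y)$. States are stores $s\in\mathcal S=\mathsf{Var}\to\mathbb Z$ over a countable set of variables $\mathsf{Var}$. Atomic actions are assignments $x:=E$ with integer expressions $E$ (variables, integer constants, tests, $+,-,\times$) and $[\![x:=E]\!](s)=\eta(s[x\mapsto[\![E]\!](s)])$. Programs: $C::=\mathsf{skip}\mid C_1;C_2\mid C_1+C_2\mid\mathsf{assume}\ e\mid C^{\langle e,e'\rangle}\mid x:=E$, with $e$ a test (Boolean combination of $\mathsf{true},\mathsf{false}$ and arbitrary subsets $t\subseteq\mathcal S$, evaluating to $\mathbf 1$ iff true) or a weight $u\in U$. Semantics: $[\![\mathsf{skip}]\!](s)=\eta(s)$;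 $[\![C_1;C_2]\!](s)=[\![C_2]\!]^\dagger([\![C_1]\!](s))$; $[\![C_1+C_2]\!](s)=[\![C_1]\!](s)+[\![C_2]\!](s)$; $[\![\mathsf{assume}\ e]\!](s)=[\![e]\!](s)\cdot\eta(s)$; $[\![C^{\langle e,e'\rangle}]\!]$ is the least fixed point (pointwise order) of $\Phi(f)(s)=[\![e]\!](s)\cdot f^\dagger([\![C]\!](s))+[\![e']\!](s)\cdot\eta(s)$. Well-formed: semantics total. $\vDash\{\varphi\}C\{\psi\}$ for $\varphi,\psi\subseteq\mathcal W(\mathcal S)$ iff $[\![C]\!]^\dagger(m)\in\psi$ for every $m\in\varphi$. $\Box P=\{m:\mathrm{supp}(m)\subseteq P\}$. $\mathrm{free}(P)=\{x\in\mathsf{Var}:\exists s\in P, v\in\mathbb Z.\ s[x\mapsto v]\notin P\}$. $\mathrm{mod}(\mathsf{skip})=\mathrm{mod}(\mathsf{assume}\ e)=\emptyset$, $\mathrm{mod}(C_1;C_2)=\mathrm{mod}(C_1+C_2)=\mathrm{mod}(C_1)\cup\mathrm{mod}(C_2)$, $\mathrm{mod}(C^{\langle e,e'\rangle})=\mathrm{mod}(C)$, $\mathrm{mod}(x:=E)=\{x\}$. *)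

(* Defs.v *)
From Stdlib Require Import ZArith List Classical ClassicalEpsilon.
Import ListNotations.
Set Implicit Arguments.

Definition is_ub {T} (le : T -> T -> Prop) (D : T -> Prop) (u : T) : Prop :=
  forall d, D d -> le d u.
Definition is_lub {T} (le : T -> T -> Prop) (D : T -> Prop) (u : T) : Prop :=
  is_ub le D u /\ forall v, is_ub le D v -> le u v.
Definition directed {T} (le : T -> T -> Prop) (D : T -> Prop) : Prop :=
  (exists d, D d) /\
  forall a b, D a -> D b -> exists c, D c /\ le a c /\ le b c.

Record psemiring := PSemiring {
  car :> Type;
  padd : car -> car -> option car;
  pmul : car -> car -> car;
  pzero : car;
  pone : car;
  padd_comm : forall a b, padd a b = padd b a;
  padd_assoc : forall a b c,
    match padd a b with Some ab => padd ab c | None => None end =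
    match padd b c with Some bc => padd a bc | None => None end;
  padd_0r : forall a, padd a pzero = Some a;
  pmul_assoc : forall a b c, pmul a (pmul b c) = pmul (pmul a b) c;
  pmul_1l : forall a, pmul pone a = a;
  pmul_1r : forall a, pmul a pone = a;
  pmul_distr_l : forall a b c bc, padd b c = Some bc ->
    padd (pmul a b) (pmul a c) = Some (pmul a bc);
  pmul_distr_r : forall a b c bc, padd b c = Some bc ->
    padd (pmul b a) (pmul c a) = Some (pmul bc a);
  pmul_0l : forall a, pmul pzero a = pzero;
  pmul_0r : forall a, pmul a pzero = pzero
}.

Arguments padd {p}. Arguments pmul {p}. Arguments pzero {p}. Arguments pone {p}.

Section Semiring.
Variable A : psemiring.

Definition nle (u v : A) : Prop := exists w, padd u w = Some v.

(* naturally ordered: the natural order is a partial order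
   (reflexivity and transitivity are automatic; antisymmetry is required) *)
Definition naturally_ordered : Prop :=
  forall u v, nle u v -> nle v u -> u = v.

Definition scott_continuous : Prop :=
  (forall D : A -> Prop, directed nle D -> exists s, is_lub nle D s) /\
  (forall (D : A -> Prop) (s u : A), directed nle D -> is_lub nle D s ->
     (forall d, D d -> exists w, padd u d = Some w) ->
     exists v, padd u s = Some v /\
       is_lub nle (fun w => exists d, D d /\ padd u d = Some w) v) /\
  (forall (D : A -> Prop) (s u : A), directed nle D -> is_lub nle D s ->
     is_lub nle (fun w => exists d, D d /\ w = pmul u d) (pmul u s)) /\
  (forall (D : A -> Prop) (s u : A), directed nle D -> is_lub nle D s ->
     is_lub nle (fun w => exists d, D d /\ w = pmul d u) (pmul s u)).

Definition has_top : Prop := exists t : A, forall u, nle u t.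

Fixpoint fsum {X} (f : X -> A) (l : list X) : option A :=
  match l with
  | [] => Some pzero
  | x :: l' => match fsum f l' with Some s => padd (f x) s | None => None end
  end.

Definition is_sum {X} (f : X -> A) (I : X -> Prop) (u : A) : Prop :=
  (forall l, NoDup l -> Forall I l -> exists v, fsum f l = Some v) /\
  is_lub nle (fun v => exists l, NoDup l /\ Forall I l /\ fsum f l = Some v) u.

Definition supp {X} (m : X -> A) : X -> Prop := fun x => m x <> pzero.

Definition countable {X} (P : X -> Prop) : Prop :=
  exists f : X -> nat, forall x y, P x -> P y -> f x = f y -> x = y.

Definition inW {X} (m : X -> A) : Prop :=
  countable (supp m) /\ exists u, is_sum m (supp m) u.

Definition eta {X} (x : X) : X -> A :=
  fun y => if excluded_middle_informative (x = y) then pone else pzero.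

Definition scale {X} (u : A) (m : X -> A) : X -> A := fun x => pmul u (m x).

Definition wadd {X} (m1 m2 m : X -> A) : Prop :=
  (forall x, padd (m1 x) (m2 x) = Some (m x)) /\ inW m.

(* [bind m R m'] : for a (relationally given, possibly partial) map
   f : X -> W(Y), f^dagger(m) is defined and equals m'. *)
Definition bind {X Y} (m : X -> A) (R : X -> (Y -> A) -> Prop) (m' : Y -> A)
  : Prop :=
  exists g : X -> Y -> A,
    (forall x, supp m x -> R x (g x) /\ inW (g x)) /\
    (forall y, is_sum (fun x => pmul (m x) (g x y)) (supp m) (m' y)) /\
    inW m'.

End Semiring.

Arguments nle {A}. Arguments fsum {A X}. Arguments is_sum {A X}. Arguments supp {A X}.
Arguments inW {A X}. Arguments scale {A X}. Arguments wadd {A X}. Arguments bind {A X Y}.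
Arguments eta A {X}.

Section Syntax.
Variable Var : Type.
Definition store := Var -> Z.

Definition update (s : store) (x : Var) (v : Z) : store :=
  fun y => if excluded_middle_informative (y = x) then v else s y.

Inductive test :=
  | TTrue | TFalse | TAtom (t : store -> Prop)
  | TAnd (b1 b2 : test) | TOr (b1 b2 : test) | TNot (b : test).

Fixpoint teval (b : test) (s : store) : Prop :=
  match b with
  | TTrue => True | TFalse => False | TAtom t => t s
  | TAnd b1 b2 => teval b1 s /\ teval b2 s
  | TOr b1 b2 => teval b1 s \/ teval b2 s
  | TNot b => ~ teval b s
  end.

Inductive expr :=
  | EVar (x : Var) | EConst (z : Z) | ETest (b : test)
  | EAdd (e1 e2 : expr) | ESub (e1 e2 : expr) | EMul (e1 e2 : expr).

Fixpoint eeval (e : expr) (s : store) : Z :=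
  match e with
  | EVar x => s x
  | EConst z => z
  | ETest b => if excluded_middle_informative (teval b s) then 1%Z else 0%Z
  | EAdd e1 e2 => (eeval e1 s + eeval e2 s)%Z
  | ESub e1 e2 => (eeval e1 s - eeval e2 s)%Z
  | EMul e1 e2 => (eeval e1 s * eeval e2 s)%Z
  end.

Variable U : Type.

Inductive guard := GTest (b : test) | GWeight (u : U).

Inductive prog :=
  | Skip
  | PSeq (C1 C2 : prog)
  | PPlus (C1 C2 : prog)
  | Assume (e : guard)
  | Iter (C : prog) (e e' : guard)
  | Assign (x : Var) (E : expr).

Fixpoint modv (C : prog) : Var -> Prop :=
  match C with
  | Skip => fun _ => False
  | Assume _ => fun _ => False
  | PSeq C1 C2 | PPlus C1 C2 => fun y => modv C1 y \/ modv C2 y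
  | Iter C _ _ => modv C
  | Assign x _ => fun y => y = x
  end.

Definition free (P : store -> Prop) : Var -> Prop :=
  fun x => exists s v, P s /\ ~ P (update s x v).

End Syntax.

Arguments TTrue {Var}. Arguments TFalse {Var}.
Arguments Skip {Var U}. Arguments PSeq {Var U}. Arguments PPlus {Var U}. Arguments Assume {Var U}. Arguments Iter {Var U}. Arguments Assign {Var U}. Arguments GTest {Var U}. Arguments GWeight {Var U}.

Section Semantics.
Variable A : psemiring.
Variable Var : Type.
Notation S := (store Var).

Definition gsem (e : guard Var A) (s : S) : A :=
  match e with
  | GTest b => if excluded_middle_informative (teval b s) then pone else pzero
  | GWeight u => u
  end.

(* [PhiRel R e e' f g] : Phi(f) is defined and equals g, where
   Phi(f)(s) = [[e]](s) . f^dagger([[C]](s)) + [[e']](s) . eta(s),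
   and R is the semantics [[C]]. *)
Definition PhiRel (R : S -> (S -> A) -> Prop) (e e' : guard Var A)
  (f g : S -> S -> A) : Prop :=
  forall s, exists mC mb, R s mC /\ bind mC (fun x m => m = f x) mb /\
    wadd (scale (gsem e s) mb) (scale (gsem e' s) (eta A s)) (g s).

Definition is_lfp (R : S -> (S -> A) -> Prop) (e e' : guard Var A)
  (f : S -> S -> A) : Prop :=
  PhiRel R e e' f f /\
  forall g, PhiRel R e e' g g -> forall s x, nle (f s x) (g s x).

Fixpoint sem (C : prog Var A) : S -> (S -> A) -> Prop :=
  match C with
  | Skip => fun s m => m = eta A s
  | PSeq C1 C2 => fun s m => exists m1, sem C1 s m1 /\ bind m1 (sem C2) m
  | PPlus C1 C2 => fun s m => exists m1 m2,
      sem C1 s m1 /\ sem C2 s m2 /\ wadd m1 m2 m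
  | Assume e => fun s m => m = scale (gsem e s) (eta A s)
  | Iter C e e' => fun s m => exists f, is_lfp (sem C) e e' f /\ m = f s
  | Assign x E => fun s m => m = eta A (update s x (eeval E s))
  end.

Definition well_formed (C : prog Var A) : Prop := forall s, exists m, sem C s m.

Definition valid (phi : (S -> A) -> Prop) (C : prog Var A)
  (psi : (S -> A) -> Prop) : Prop :=
  forall m, phi m -> exists m', bind m (sem C) m' /\ psi m'.

Definition box (P : S -> Prop) : (S -> A) -> Prop :=
  fun m => inW m /\ forall s, supp m s -> P s.

End Semantics.

Arguments well_formed {A Var}. Arguments valid {A Var}. Arguments box A {Var}.
Arguments sem {A Var}. Arguments gsem {A Var}.

(* Main.v *)
Require Import Defs.
From Stdlib Require Import ZArith List Classical ClassicalEpsilon FunctionalExtensionality Permutation Cantor.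
Import ListNotations.
Set Implicit Arguments.

Definition oadd (A : psemiring) (x y : option A) : option A :=
  match x, y with Some a, Some b => padd a b | _, _ => None end.
Arguments oadd {A}.

Lemma padd_0l {A : psemiring} (a : A) : padd pzero a = Some a.
Proof. rewrite padd_comm; apply padd_0r. Qed.

Lemma oadd_comm {A : psemiring} (x y : option A) : oadd x y = oadd y x.
Proof. destruct x, y; simpl; auto using padd_comm. Qed.

Lemma oadd_assoc {A : psemiring} (x y z : option A) :
  oadd (oadd x y) z = oadd x (oadd y z).
Proof.
  destruct x as [a|], y as [b|], z as [c|]; simpl; auto.
  all: try (pose proof (padd_assoc A a b c) as H; exact H).
  all: try (destruct (padd a b); auto; fail).
  all: try (destruct (padd b c); auto; fail).
Qed.

Lemma oadd_lcomm {A : psemiring} (x y z : option A) :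
  oadd x (oadd y z) = oadd y (oadd x z).
Proof. rewrite <- !oadd_assoc, (oadd_comm x y). reflexivity. Qed.

Lemma oadd_ac4 {A : psemiring} (x y z w : option A) :
  oadd (oadd x y) (oadd z w) = oadd (oadd x z) (oadd y w).
Proof. rewrite !oadd_assoc, (oadd_lcomm y z w). reflexivity. Qed.

Lemma oadd_0l {A : psemiring} (x : option A) : oadd (Some pzero) x = x.
Proof. destruct x; simpl; auto using padd_0l. Qed.

Lemma oadd_inv {A : psemiring} (x y : option A) z : oadd x y = Some z ->
  exists a b, x = Some a /\ y = Some b /\ padd a b = Some z.
Proof. destruct x, y; simpl; intro H; try discriminate; eauto. Qed.

Lemma nle_refl {A : psemiring} (a : A) : nle a a.
Proof. exists pzero; apply padd_0r. Qed.

Lemma nle_0 {A : psemiring} (a : A) : nle pzero a.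
Proof. exists a; apply padd_0l. Qed.

Lemma nle_trans {A : psemiring} (a b c : A) : nle a b -> nle b c -> nle a c.
Proof.
  intros [w1 H1] [w2 H2].
  assert (H : oadd (oadd (Some a) (Some w1)) (Some w2) = Some c) by (simpl; rewrite H1; exact H2).
  rewrite oadd_assoc in H. apply oadd_inv in H as (a' & b' & Ha & Hb & Hc).
  inversion Ha; subst. exists b'; auto.
Qed.

Lemma add_mono {A : psemiring} (a b c d e : A) : nle a b -> nle c d -> padd b d = Some e ->
  exists f, padd a c = Some f /\ nle f e.
Proof.
  intros [w1 H1] [w2 H2] H.
  assert (H' : oadd (oadd (Some a) (Some w1)) (oadd (Some c) (Some w2)) = Some e)
    by (simpl; rewrite H1, H2; exact H).
  rewrite oadd_ac4 in H'. apply oadd_inv in H' as (f & g & Hf & Hg & He).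
  exists f; split; [exact Hf | exists g; exact He].
Qed.

Lemma add_defined_le {A : psemiring} (a b c e : A) : nle a b -> padd b c = Some e ->
  exists f, padd a c = Some f /\ nle f e.
Proof. intros H1 H2. eapply add_mono; eauto using nle_refl. Qed.

Lemma mul_mono_l {A : psemiring} (a b c : A) : nle a b -> nle (pmul c a) (pmul c b).
Proof. intros [w H]. exists (pmul c w). apply pmul_distr_l; auto. Qed.

Lemma mul_mono_r {A : psemiring} (a b c : A) : nle a b -> nle (pmul a c) (pmul b c).
Proof. intros [w H]. exists (pmul w c). apply pmul_distr_r; auto. Qed.

Lemma nle_antisym0 {A : psemiring} (Hnat : naturally_ordered A) (a : A) :
  nle a pzero -> a = pzero.
Proof. intro H. apply Hnat; auto using nle_0. Qed.

Fixpoint osum {A : psemiring} {X} (F : X -> option A) (l : list X) : option A :=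
  match l with [] => Some pzero | x :: l' => oadd (F x) (osum F l') end.

Lemma fsum_cons {A : psemiring} X (f : X -> A) x l :
  fsum f (x :: l) = oadd (Some (f x)) (fsum f l).
Proof. simpl. destruct (fsum f l); reflexivity. Qed.

Lemma fsum_osum {A : psemiring} X (f : X -> A) l :
  fsum f l = osum (fun x => Some (f x)) l.
Proof. induction l; auto. rewrite fsum_cons, IHl. reflexivity. Qed.

Lemma fsum_app {A : psemiring} X (f : X -> A) l1 l2 :
  fsum f (l1 ++ l2) = oadd (fsum f l1) (fsum f l2).
Proof.
  induction l1; simpl app.
  - simpl fsum. rewrite oadd_0l. reflexivity.
  - rewrite !fsum_cons, IHl1, oadd_assoc. reflexivity.
Qed.

Lemma fsum_perm {A : psemiring} X (f : X -> A) l l' :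
  Permutation l l' -> fsum f l = fsum f l'.
Proof.
  induction 1.
  - reflexivity.
  - rewrite !fsum_cons, IHPermutation; reflexivity.
  - rewrite !fsum_cons. apply oadd_lcomm.
  - congruence.
Qed.

Lemma fsum_ext {A : psemiring} X (f h : X -> A) l :
  (forall x, In x l -> f x = h x) -> fsum f l = fsum h l.
Proof.
  induction l; intros H; auto. rewrite !fsum_cons, IHl, (H a); simpl; auto.
  intros; apply H; simpl; auto.
Qed.

Lemma fsum_zero {A : psemiring} X (f : X -> A) l :
  (forall x, In x l -> f x = pzero) -> fsum f l = Some pzero.
Proof.
  induction l; intros H; auto. rewrite fsum_cons, IHl, (H a); simpl; auto using padd_0r.
  intros; apply H; simpl; auto.
Qed.

Lemma osum_zero {A : psemiring} X l : osum (fun _ : X => Some (@pzero A)) l = Some pzero.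
Proof. induction l; auto. simpl. rewrite IHl. simpl. apply padd_0r. Qed.

Lemma osum_oadd {A : psemiring} X (F G : X -> option A) l :
  osum (fun x => oadd (F x) (G x)) l = oadd (osum F l) (osum G l).
Proof.
  induction l; simpl.
  - rewrite padd_0r; auto.
  - rewrite IHl, oadd_ac4. reflexivity.
Qed.

Lemma osum_exchange {A : psemiring} X Y (F : X -> Y -> option A) lx ly :
  osum (fun y => osum (fun x => F x y) lx) ly = osum (fun x => osum (fun y => F x y) ly) lx.
Proof.
  induction ly; simpl.
  - symmetry; apply osum_zero.
  - rewrite IHly, <- osum_oadd. reflexivity.
Qed.

Lemma osum_le {A : psemiring} X (F G : X -> option A) l B :
  (forall x, In x l -> forall b, G x = Some b -> exists a, F x = Some a /\ nle a b) ->
  osum G l = Some B -> exists a, osum F l = Some a /\ nle a B.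
Proof.
  revert B; induction l; simpl; intros B H HB.
  - exists pzero; split; auto. apply nle_0.
  - apply oadd_inv in HB as (b & B' & Hb & HB' & Hs).
    destruct (H a (or_introl eq_refl) b Hb) as (a1 & Ha1 & Hle1).
    destruct (IHl B' (fun x Hx => H x (or_intror Hx)) HB') as (a2 & Ha2 & Hle2).
    destruct (add_mono Hle1 Hle2 Hs) as (f & Hf & Hle).
    exists f. rewrite Ha1, Ha2. simpl. auto.
Qed.

Lemma fsum_mul_r {A : psemiring} X (f : X -> A) t l s :
  fsum f l = Some s -> fsum (fun x => pmul (f x) t) l = Some (pmul s t).
Proof.
  revert s; induction l; simpl; intros s H.
  - inversion H; subst. rewrite pmul_0l. auto.
  - destruct (fsum f l) as [s'|] eqn:E; [|discriminate].
    rewrite (IHl s' eq_refl). apply pmul_distr_r; auto.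
Qed.

Lemma fsum_mul_l {A : psemiring} X (f : X -> A) t l s :
  fsum f l = Some s -> fsum (fun x => pmul t (f x)) l = Some (pmul t s).
Proof.
  revert s; induction l; simpl; intros s H.
  - inversion H; subst. rewrite pmul_0r. auto.
  - destruct (fsum f l) as [s'|] eqn:E; [|discriminate].
    rewrite (IHl s' eq_refl). apply pmul_distr_l; auto.
Qed.

Lemma fsum_incl_le {A : psemiring} X (f : X -> A) l1 : forall l2 b,
  NoDup l1 -> NoDup l2 -> incl l1 l2 -> fsum f l2 = Some b ->
  exists a, fsum f l1 = Some a /\ nle a b.
Proof.
  induction l1 as [|a l1 IH]; intros l2 b Hn1 Hn2 Hi Hb.
  - exists pzero; split; auto. apply nle_0.
  - assert (Ha : In a l2) by (apply Hi; left; auto).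
    destruct (in_split _ _ Ha) as (p & q & ->).
    rewrite (fsum_perm f (Permutation_sym (Permutation_middle p q a))), fsum_cons in Hb.
    apply oadd_inv in Hb as (fa & b' & Hfa & Hb' & Hs). inversion Hfa; subst.
    inversion Hn1; subst.
    assert (Hi' : incl l1 (p ++ q)).
    { intros z Hz. assert (Hz2 : In z (p ++ a :: q)) by (apply Hi; right; auto).
      apply in_app_or in Hz2. apply in_or_app. destruct Hz2 as [Hz2|[Hz2|Hz2]]; auto.
      subst; contradiction. }
    destruct (IH (p ++ q) b' H2 (NoDup_remove_1 _ _ _ Hn2) Hi' Hb') as (a' & Ha' & Hle).
    destruct (add_mono (nle_refl (f a)) Hle Hs) as (r & Hr & Hle2).
    exists r. rewrite fsum_cons, Ha'. simpl. auto.
Qed.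

Lemma lub_unique {A : psemiring} (Hnat : naturally_ordered A) (D : A -> Prop) a b :
  is_lub nle D a -> is_lub nle D b -> a = b.
Proof. intros [Ua La] [Ub Lb]. apply Hnat; auto. Qed.

Lemma is_lub_ext {A : psemiring} (D D' : A -> Prop) u :
  (forall v, D v <-> D' v) -> is_lub nle D u -> is_lub nle D' u.
Proof.
  intros H [U L]. split.
  - intros d Hd. apply U, H, Hd.
  - intros v Hv. apply L. intros d Hd. apply Hv, H, Hd.
Qed.

Lemma is_sum_ext {A : psemiring} X (f h : X -> A) (I : X -> Prop) u :
  (forall x, I x -> f x = h x) -> is_sum f I u -> is_sum h I u.
Proof.
  intros E [Hd Hl].
  assert (Hf : forall l, Forall I l -> fsum f l = fsum h l).
  { intros l Hl'. apply fsum_ext. intros x Hx. apply E. rewrite Forall_forall in Hl'. auto. }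
  split.
  - intros l Hn Hl'. rewrite <- (Hf l Hl'); auto.
  - eapply is_lub_ext; [|exact Hl]. intro v; split; intros (l & H1 & H2 & H3); exists l;
      [rewrite <- (Hf l H2) | rewrite (Hf l H2)]; auto.
Qed.

Lemma is_sum_zero {A : psemiring} (Hnat : naturally_ordered A) X (f : X -> A) I u :
  is_sum f I u -> (forall x, I x -> f x = pzero) -> u = pzero.
Proof.
  intros [Hd [U L]] Hz. apply Hnat; [|apply nle_0].
  apply L. intros d (l & H1 & H2 & H3).
  rewrite fsum_zero in H3.
  - inversion H3; subst. apply nle_refl.
  - intros x Hx. apply Hz. rewrite Forall_forall in H2; auto.
Qed.

Lemma zero_is_sum {A : psemiring} X (f : X -> A) (I : X -> Prop) :
  (forall x, I x -> f x = pzero) -> is_sum f I pzero.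
Proof.
  intros Hz.
  assert (H0 : forall l, Forall I l -> fsum f l = Some pzero).
  { intros l Hl. apply fsum_zero. intros x Hx. apply Hz. rewrite Forall_forall in Hl; auto. }
  split; [|split].
  - intros l _ Hl. eauto.
  - intros d (l & H1 & H2 & H3). rewrite H0 in H3; auto. inversion H3; apply nle_refl.
  - intros v Hv. apply Hv. exists []. split; [constructor|split; [constructor|reflexivity]].
Qed.

Definition xdec {X : Type} (x y : X) : {x = y} + {x <> y} := excluded_middle_informative (x = y).

Lemma psums_directed {A : psemiring} X (f : X -> A) (I : X -> Prop) :
  (forall l, NoDup l -> Forall I l -> exists v, fsum f l = Some v) ->
  directed nle (fun v => exists l, NoDup l /\ Forall I l /\ fsum f l = Some v).
Proof.
  intros Hd. split.
  - exists pzero, []. split; [constructor|split; [constructor|reflexivity]].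
  - intros a b (l1 & N1 & F1 & E1) (l2 & N2 & F2 & E2).
    set (l3 := nodup xdec (l1 ++ l2)).
    assert (N3 : NoDup l3) by apply NoDup_nodup.
    assert (F3 : Forall I l3).
    { rewrite Forall_forall in *. intros x Hx. apply nodup_In in Hx.
      apply in_app_or in Hx as [Hx|Hx]; auto. }
    destruct (Hd l3 N3 F3) as [c Ec].
    exists c. split; [exists l3; auto|].
    split.
    + destruct (fsum_incl_le f N1 N3 (fun x Hx => proj2 (nodup_In xdec _ x) (in_or_app _ _ _ (or_introl Hx))) Ec) as (a' & Ea & Hle).
      rewrite E1 in Ea. inversion Ea; subst; auto.
    + destruct (fsum_incl_le f N2 N3 (fun x Hx => proj2 (nodup_In xdec _ x) (in_or_app _ _ _ (or_intror Hx))) Ec) as (a' & Ea & Hle).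
      rewrite E2 in Ea. inversion Ea; subst; auto.
Qed.

Lemma sum_exists {A : psemiring} (Hscott : scott_continuous A) X (f : X -> A) (I : X -> Prop) :
  (forall l, NoDup l -> Forall I l -> exists v, fsum f l = Some v) ->
  exists u, is_sum f I u.
Proof.
  intros Hd. destruct Hscott as [S1 _].
  destruct (S1 _ (psums_directed f Hd)) as [u Hu].
  exists u. split; auto.
Qed.

Lemma is_sum_defined {A : psemiring} X (f : X -> A) I u l :
  is_sum f I u -> NoDup l -> Forall I l -> exists v, fsum f l = Some v.
Proof. intros [H _]; auto. Qed.

Definition restrict {A : psemiring} {X} (R : X -> Prop) (m : X -> A) : X -> A :=
  fun y => if excluded_middle_informative (R y) then m y else pzero.

Lemma supp_restrict {A : psemiring} X (R : X -> Prop) (m : X -> A) y :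
  supp (restrict R m) y -> supp m y /\ R y.
Proof.
  unfold restrict, supp. destruct (excluded_middle_informative (R y)); auto.
  intro H; now elim H.
Qed.

Lemma inW_restrict {A : psemiring} (Hscott : scott_continuous A) X (R : X -> Prop) (m : X -> A) :
  inW m -> inW (restrict R m).
Proof.
  intros [[c Hc] [u Hu]]. split.
  - exists c. intros x y Hx Hy. apply supp_restrict in Hx, Hy. apply Hc; tauto.
  - apply sum_exists; auto. intros l Hn Hl.
    assert (Hl' : Forall (supp m) l /\ Forall R l).
    { rewrite !Forall_forall in *. split; intros x Hx; apply (supp_restrict (Hl x Hx)). }
    rewrite (fsum_ext _ m).
    + eapply is_sum_defined; eauto. tauto.
    + intros x Hx. unfold restrict. destruct (excluded_middle_informative (R x)); auto.
      destruct Hl' as [_ Hl']. rewrite Forall_forall in Hl'. elim n; auto.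
Qed.

Lemma inW_single {A : psemiring} (Hscott : scott_continuous A) X (m : X -> A) s :
  (forall y, supp m y -> y = s) -> inW m.
Proof.
  intros Hs. split.
  - exists (fun _ => 0). intros x y Hx Hy _. rewrite (Hs x Hx), (Hs y Hy); auto.
  - apply sum_exists; auto. intros l Hn Hl.
    destruct l as [|x [|y l]].
    + eexists; reflexivity.
    + simpl. rewrite padd_0r. eauto.
    + exfalso. rewrite Forall_forall in Hl.
      assert (x = s) by (apply Hs, Hl; simpl; auto).
      assert (y = s) by (apply Hs, Hl; simpl; auto). subst.
      apply NoDup_cons_iff in Hn. apply (proj1 Hn). simpl; auto.
Qed.

Lemma eta_supp {A : psemiring} X (s y : X) : supp (eta A s) y -> y = s.
Proof.
  unfold supp, eta. destruct (excluded_middle_informative (s = y)); auto.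
  intro H; now elim H.
Qed.

Lemma scale_eta_supp {A : psemiring} X (u : A) (s y : X) : supp (scale u (eta A s)) y -> y = s.
Proof.
  unfold supp, scale, eta. destruct (excluded_middle_informative (s = y)); auto.
  rewrite pmul_0r. intro H; now elim H.
Qed.

Lemma sem_inW {A : psemiring} (Hscott : scott_continuous A) Var (C : prog Var A) s m :
  sem C s m -> inW m.
Proof.
  destruct C; simpl; intro H.
  - subst. apply (inW_single Hscott (s:=s)). intros y Hy. exact (eta_supp Hy).
  - destruct H as (m1 & _ & g & _ & _ & Hm). exact Hm.
  - destruct H as (m1 & m2 & _ & _ & _ & Hm). exact Hm.
  - subst. apply (inW_single Hscott (s:=s)). intros y Hy. eapply scale_eta_supp; eauto.
  - destruct H as (f & [Hfix _] & ->). destruct (Hfix s) as (mC & mb & _ & _ & _ & Hm). exact Hm.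
  - subst. apply (inW_single Hscott (s:=update s x (eeval E s))). intros y Hy. exact (eta_supp Hy).
Qed.

Lemma update_back Var (s : store Var) x v : update (update s x v) x (s x) = s.
Proof.
  apply functional_extensionality; intro y. unfold update.
  destruct (excluded_middle_informative (y = x)); subst; auto.
Qed.

Lemma free_neg Var (Q : store Var -> Prop) x : free (fun s => ~ Q s) x -> free Q x.
Proof.
  intros (s & v & H1 & H2). exists (update s x v), (s x). split.
  - apply NNPP; exact H2.
  - rewrite update_back; exact H1.
Qed.

Lemma pres {A : psemiring} (Hnat : naturally_ordered A) (Hscott : scott_continuous A) Var
  (C : prog Var A) : forall (Q : store Var -> Prop),
  (forall x, free Q x -> modv C x -> False) ->
  forall s m, sem C s m -> Q s -> forall y, supp m y -> Q y.
Proof.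
  induction C as [ | C1 IH1 C2 IH2 | C1 IH1 C2 IH2 | e | C IH e e' | x E ];
    intros Q HQ s m Hsem Hs y Hy; simpl in Hsem.
  - subst. apply eta_supp in Hy. subst; auto.
  - destruct Hsem as (m1 & H1 & g & Hg & Hsum & _).
    apply NNPP; intro Hny. apply Hy.
    apply (is_sum_zero Hnat (Hsum y)). intros x Hx.
    assert (HQx : Q x) by (eapply IH1; eauto; intros z Hz Hm; eapply HQ; eauto; left; auto).
    destruct (Hg x Hx) as [Hgx _].
    assert (Hz : g x y = pzero).
    { apply NNPP; intro Hne. apply Hny. eapply IH2; eauto.
      intros z Hz Hm; eapply HQ; eauto; right; auto. }
    rewrite Hz. apply pmul_0r.
  - destruct Hsem as (m1 & m2 & H1 & H2 & [Hw _]).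
    apply NNPP; intro Hny. apply Hy.
    assert (Z1 : m1 y = pzero).
    { apply NNPP; intro Hne. apply Hny. eapply IH1; eauto.
      intros z Hz Hm; eapply HQ; eauto; left; auto. }
    assert (Z2 : m2 y = pzero).
    { apply NNPP; intro Hne. apply Hny. eapply IH2; eauto.
      intros z Hz Hm; eapply HQ; eauto; right; auto. }
    pose proof (Hw y) as Hy'. rewrite Z1, Z2, padd_0r in Hy'. inversion Hy'; auto.
  - subst. apply scale_eta_supp in Hy. subst; auto.
  - destruct Hsem as (f & [Hfix Hmin] & ->).
    assert (HQC : forall x, free Q x -> modv C x -> False) by exact HQ.
    assert (HnQC : forall x, free (fun s => ~ Q s) x -> modv C x -> False)
      by (intros z Hz; apply HQ, free_neg, Hz).
    set (g := fun s' y => if excluded_middle_informative (Q s' <-> Q y) then f s' y else pzero).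
    assert (Hphi : PhiRel A (sem C) e e' g g).
    { intro s'. destruct (Hfix s') as (mC & mb & HC & Hb & Hw).
      assert (Hcls : forall x, supp mC x -> (Q x <-> Q s')).
      { intros x Hx. split; intro H.
        - apply NNPP; intro H'. exact (IH _ HnQC s' mC HC H' x Hx H).
        - exact (IH _ HQC s' mC HC H x Hx). }
      exists mC, (restrict (fun y => Q s' <-> Q y) mb).
      destruct Hb as (g0 & Hg0 & Hs0 & HW0).
      split; [exact HC|split].
      - exists g. split; [|split].
        + intros x Hx. split; auto.
          destruct (Hfix x) as (_ & _ & _ & _ & _ & Hfx).
          exact (inW_restrict Hscott (fun y => Q x <-> Q y) Hfx).
        + intro z. unfold restrict.
          destruct (excluded_middle_informative (Q s' <-> Q z)) as [Hc|Hc].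
          * eapply is_sum_ext; [|exact (Hs0 z)]. intros x Hx. simpl.
            destruct (Hg0 x Hx) as [-> _]. unfold g.
            destruct (excluded_middle_informative (Q x <-> Q z)) as [_|Hn]; auto.
            exfalso; apply Hn. pose proof (Hcls x Hx). tauto.
          * apply zero_is_sum. intros x Hx. unfold g.
            destruct (excluded_middle_informative (Q x <-> Q z)) as [Hn|_];
              [|apply pmul_0r].
            exfalso; apply Hc. pose proof (Hcls x Hx). tauto.
        + exact (inW_restrict Hscott _ HW0).
      - destruct Hw as [Hw HWf]. split.
        + intro z. unfold scale, restrict, g.
          destruct (excluded_middle_informative (Q s' <-> Q z)) as [Hc|Hc]; [apply Hw|].
          assert (Hez : eta A s' z = pzero).
          { unfold eta. destruct (excluded_middle_informative (s' = z)); auto.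
            subst; exfalso; apply Hc; split; auto. }
          rewrite Hez, !pmul_0r. apply padd_0r.
        + exact (inW_restrict Hscott _ HWf). }
    pose proof (Hmin g Hphi s y) as Hle.
    unfold g in Hle. destruct (excluded_middle_informative (Q s <-> Q y)) as [Hc|Hc].
    + apply Hc; auto.
    + exfalso. apply Hy. apply (nle_antisym0 Hnat Hle).
  - subst. apply eta_supp in Hy. subst.
    apply NNPP; intro Hn. apply (HQ x); [|reflexivity].
    exists s, (eeval E s). auto.
Qed.

Lemma fsum_le {A : psemiring} X (f h : X -> A) l B :
  (forall x, In x l -> nle (f x) (h x)) -> fsum h l = Some B ->
  exists a, fsum f l = Some a /\ nle a B.
Proof.
  intros H HB. rewrite fsum_osum in *.
  apply (osum_le (fun x => Some (f x)) (fun x => Some (h x)) l); auto.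
  intros x Hx b Hb. inversion Hb; subst. eauto.
Qed.

Definition upd {Y T : Type} (c : Y -> T) (y : Y) (d : T) : Y -> T :=
  fun z => if xdec z y then d else c z.

Lemma sup_sum {A : psemiring} (Hscott : scott_continuous A) Y (D : Y -> A -> Prop) (s : Y -> A)
  (Hdir : forall y, directed nle (D y)) (Hlub : forall y, is_lub nle (D y) (s y)) :
  forall L, NoDup L -> forall u,
  (forall c, (forall y, In y L -> D y (c y)) -> exists v, oadd (Some u) (fsum c L) = Some v) ->
  exists v, oadd (Some u) (fsum s L) = Some v.
Proof.
  destruct Hscott as (_ & S2 & _).
  set (c0 := fun z => proj1_sig (constructive_indefinite_description _ (proj1 (Hdir z)))).
  assert (Hc0 : forall z, D z (c0 z)) by (intro z; exact (proj2_sig (constructive_indefinite_description _ (proj1 (Hdir z))))).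
  induction L as [|y L IH]; intros Hn u Hc.
  - apply (Hc s). intros ? [].
  - apply NoDup_cons_iff in Hn as [Hy Hn].
    assert (Hupd : forall (c : Y -> A) d, fsum (upd c y d) L = fsum c L).
    { intros c d. apply fsum_ext. intros z Hz. unfold upd. destruct (xdec z y); auto.
      subst; contradiction. }
    assert (HcU : forall (c : Y -> A) d, (forall z, In z L -> D z (c z)) -> D y d ->
              exists v, oadd (Some u) (oadd (Some d) (fsum c L)) = Some v).
    { intros c d HcL Hd. destruct (Hc (upd c y d)) as [v Hv].
      - intros z [Hz|Hz]; unfold upd; destruct (xdec z y); subst; auto. contradiction.
      - rewrite fsum_cons, Hupd in Hv. unfold upd in Hv. destruct (xdec y y); [|contradiction].
        eauto. }
    destruct (S2 (D y) (s y) u (Hdir y) (Hlub y)) as (v0 & Hv0 & _).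
    { intros d Hd. destruct (HcU c0 d (fun z _ => Hc0 z) Hd) as [v Hv].
      rewrite <- oadd_assoc in Hv. apply oadd_inv in Hv as (a & b & Ha & _). eauto. }
    destruct (IH Hn v0) as [v Hv].
    + intros c HcL.
      destruct (HcU c (c0 y) HcL (Hc0 y)) as [v Hv].
      rewrite oadd_lcomm in Hv. apply oadd_inv in Hv as (a & w & _ & Hw & _).
      destruct (S2 (D y) (s y) w (Hdir y) (Hlub y)) as (v1 & Hv1 & _).
      { intros d Hd. destruct (HcU c d HcL Hd) as [v' Hv'].
        rewrite oadd_lcomm, Hw in Hv'. simpl in Hv'. rewrite padd_comm in Hv'. eauto. }
      exists v1.
      replace (Some v0) with (oadd (Some u) (Some (s y))) by exact Hv0.
      rewrite oadd_assoc, oadd_lcomm, Hw. simpl. rewrite padd_comm. exact Hv1.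
    + exists v. rewrite fsum_cons, <- oadd_assoc. simpl oadd at 2. rewrite Hv0. exact Hv.
Qed.

Lemma fsum_filter_zero {A : psemiring} X (h : X -> A) l :
  fsum h l = fsum h (filter (fun y => if excluded_middle_informative (h y = pzero) then false else true) l).
Proof.
  induction l as [|a l IH]; simpl filter; auto.
  destruct (excluded_middle_informative (h a = pzero)) as [E|E].
  - rewrite fsum_cons, E, oadd_0l. exact IH.
  - rewrite !fsum_cons, IH. reflexivity.
Qed.

Lemma inW_fsum_defined {A : psemiring} X (h : X -> A) L :
  inW h -> NoDup L -> exists v, fsum h L = Some v.
Proof.
  intros [_ [u Hu]] Hn. rewrite fsum_filter_zero.
  eapply is_sum_defined; [exact Hu| apply NoDup_filter; auto |].
  rewrite Forall_forall. intros x Hx. apply filter_In in Hx as [_ Hx].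
  destruct (excluded_middle_informative (h x = pzero)); [discriminate|]. exact n.
Qed.

Theorem lemmaC1 (A : psemiring) (Var : Type)
  (Hcount : countable (fun _ : Var => True))
  (Hnat : naturally_ordered A) (Hscott : scott_continuous A) (Htop : has_top A)
  (C : prog Var A) (P : store Var -> Prop) :
  well_formed C ->
  (forall x, free P x -> modv C x -> False) ->
  valid (box A P) C (box A P).
Proof.
  intros HWF HP m [Hm HmP].
  destruct Htop as [t Ht].
  set (g := fun x => proj1_sig (constructive_indefinite_description _ (HWF x))).
  assert (Hg : forall x, sem C x (g x))
    by (intro x; exact (proj2_sig (constructive_indefinite_description _ (HWF x)))).
  assert (HgW : forall x, inW (g x)) by (intro x; eapply sem_inW; [exact Hscott|exact (Hg x)]).
  pose proof Hm as [Hmc [um Hum]].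
  assert (HT : forall l y, NoDup l -> Forall (supp m) l ->
            exists v, fsum (fun x => pmul (m x) (g x y)) l = Some v).
  { intros l y Hn Hl. destruct (is_sum_defined Hum Hn Hl) as [M HM].
    pose proof (fsum_mul_r m t _ HM) as HMt.
    destruct (fsum_le (fun x => pmul (m x) (g x y)) (fun x => pmul (m x) t) l
                (fun x _ => mul_mono_l (m x) (Ht _)) HMt) as (a & Ha & _). eauto. }
  assert (Hex : forall y, exists u, is_sum (fun x => pmul (m x) (g x y)) (supp m) u).
  { intro y. apply (sum_exists Hscott). intros l Hn Hl. exact (HT l y Hn Hl). }
  set (m' := fun y => proj1_sig (constructive_indefinite_description _ (Hex y))).
  assert (Hm' : forall y, is_sum (fun x => pmul (m x) (g x y)) (supp m) (m' y))
    by (intro y; exact (proj2_sig (constructive_indefinite_description _ (Hex y)))).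
  assert (Hsupp' : forall y, supp m' y -> exists x, supp m x /\ supp (g x) y).
  { intros y Hy. apply NNPP; intro Hn. apply Hy. apply (is_sum_zero Hnat (Hm' y)).
    intros x Hx. assert (E : g x y = pzero) by (apply NNPP; intro H; apply Hn; eauto).
    rewrite E; apply pmul_0r. }
  assert (HP' : forall y, supp m' y -> P y).
  { intros y Hy. destruct (Hsupp' y Hy) as (x & Hx & Hgx).
    eapply (pres Hnat Hscott C HP); [exact (Hg x)|exact (HmP x Hx)|exact Hgx]. }
  assert (Hcnt : countable (supp m')).
  { destruct Hmc as [cm Hcm].
    assert (HH : forall x, exists h : store Var -> nat,
               forall a b, supp (g x) a -> supp (g x) b -> h a = h b -> a = b)
      by (intro x; exact (proj1 (HgW x))).
    set (H := fun x => proj1_sig (constructive_indefinite_description _ (HH x))).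
    assert (HHs : forall x a b, supp (g x) a -> supp (g x) b -> H x a = H x b -> a = b)
      by (intro x; exact (proj2_sig (constructive_indefinite_description _ (HH x)))).
    set (pick := fun y => match excluded_middle_informative (exists x, supp m x /\ supp (g x) y) with
                         | left Hx => proj1_sig (constructive_indefinite_description _ Hx)
                         | right _ => y end).
    assert (Hpick : forall y, supp m' y -> supp m (pick y) /\ supp (g (pick y)) y).
    { intros y Hy. unfold pick. destruct (excluded_middle_informative _) as [Hx|Hx].
      - exact (proj2_sig (constructive_indefinite_description _ Hx)).
      - exfalso; exact (Hx (Hsupp' y Hy)). }
    exists (fun y => Cantor.to_nat (cm (pick y), H (pick y) y)).
    intros y1 y2 H1 H2 E.
    apply (f_equal Cantor.of_nat) in E. rewrite !Cantor.cancel_of_to in E.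
    injection E as E1 E2.
    destruct (Hpick y1 H1) as [A1 B1]. destruct (Hpick y2 H2) as [A2 B2].
    assert (Ep : pick y1 = pick y2) by (apply Hcm; auto).
    rewrite Ep in E2, B1. exact (HHs (pick y2) y1 y2 B1 B2 E2). }
  assert (Hsum' : exists u, is_sum m' (supp m') u).
  { apply (sum_exists Hscott). intros L HnL HL.
    set (D := fun y v => exists l, NoDup l /\ Forall (supp m) l /\
                           fsum (fun x => pmul (m x) (g x y)) l = Some v).
    assert (Hdir : forall y, directed nle (D y))
      by (intro y; apply psums_directed; intros l Hn Hl; exact (HT l y Hn Hl)).
    assert (Hlub : forall y, is_lub nle (D y) (m' y)) by (intro y; exact (proj2 (Hm' y))).
    destruct (sup_sum Hscott D m' Hdir Hlub HnL pzero) as [v Hv].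
    2: { rewrite oadd_0l in Hv. eauto. }
    intros c Hc.
    assert (Hcom : exists ls, NoDup ls /\ Forall (supp m) ls /\
               forall y, In y L -> forall b, fsum (fun x => pmul (m x) (g x y)) ls = Some b ->
               nle (c y) b).
    { clear HnL HL. induction L as [|y L IHL].
      - exists []. split; [constructor|split; [constructor|]]. intros y [].
      - destruct IHL as (l1 & N1 & F1 & H1). { intros z Hz; apply Hc; right; auto. }
        destruct (Hc y (or_introl eq_refl)) as (ly & Ny & Fy & Ey).
        exists (nodup xdec (l1 ++ ly)). split; [apply NoDup_nodup|split].
        + rewrite Forall_forall in *. intros x Hx. apply nodup_In in Hx.
          apply in_app_or in Hx as [Hx|Hx]; auto.
        + intros z Hz b Hb.
          destruct Hz as [<-|Hz].
          * destruct (fsum_incl_le (fun x => pmul (m x) (g x y)) Ny (NoDup_nodup xdec _)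
               (fun x Hx => proj2 (nodup_In xdec _ x) (in_or_app _ _ _ (or_intror Hx))) Hb)
               as (a & Ea & Hle).
            rewrite Ey in Ea; inversion Ea; subst; auto.
          * destruct (fsum_incl_le (fun x => pmul (m x) (g x z)) N1 (NoDup_nodup xdec _)
               (fun x Hx => proj2 (nodup_In xdec _ x) (in_or_app _ _ _ (or_introl Hx))) Hb)
               as (a & Ea & Hle).
            eapply nle_trans; [apply (H1 z Hz a Ea)|exact Hle]. }
    destruct Hcom as (ls & Ns & Fs & Hls).
    destruct (is_sum_defined Hum Ns Fs) as [M HM].
    pose proof (fsum_mul_r m t _ HM) as HMt. rewrite fsum_osum in HMt.
    edestruct (osum_le (fun x => osum (fun y => Some (pmul (m x) (g x y))) L)
                (fun x => Some (pmul (m x) t)) ls) as (V & HV & _); [|exact HMt|].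
    { intros x Hxl b Hb. inversion Hb; subst.
      destruct (inW_fsum_defined (HgW x) HnL) as [S HS].
      pose proof (fsum_mul_l (g x) (m x) _ HS) as HS'. rewrite fsum_osum in HS'.
      exists (pmul (m x) S). split; [exact HS'|apply mul_mono_l, Ht]. }
    rewrite <- osum_exchange in HV.
    edestruct (osum_le (fun y => Some (c y))
                (fun y => osum (fun x => Some (pmul (m x) (g x y))) ls) L) as (a & Ha & _);
      [|exact HV|].
    { intros y Hy b Hb. exists (c y). split; auto. apply Hls; auto. rewrite fsum_osum. exact Hb. }
    exists a. rewrite oadd_0l, fsum_osum. exact Ha. }
  exists m'. split.
  - exists g. split; [intros x _; split; auto|split; auto]. split; auto.
  - split; [split; auto|exact HP'].
Qed.
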